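(* Let $k\ge 1$ be an integer and for $x_1,\dots,x_k\ge 1$ define $$F(x_1,\dots,x_k)=\frac{\sum_{i=1}^k i\left(1-\frac{1}{x_i}\right)}{\sum_{i=1}^k i\prod_{j=i+1}^k x_j}.$$ Then $\sup_{x_1,\dots,x_k\ge 1}F(x_1,\dots,x_k)=\frac{1}{k}$.
   Context: The empty product (for $i=k$) equals $1$. *)

(* Defs.v *)
From Stdlib Require Import Reals.
Open Scope R_scope.

Fixpoint sumR (f : nat -> R) (m len : nat) : R :=
  match len with
  | O => 0
  | S l => f m + sumR f (S m) l
  end.

(* prod_{i=m}^{m+len-1} f i *)
Fixpoint prodR (f : nat -> R) (m len : nat) : R :=
  match len with
  | O => 1
  | S l => f m * prodR f (S m) l
  end.

Definition numF (k : nat) (x : nat -> R) : R :=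
  sumR (fun i => INR i * (1 - / x i)) 1 k.

(* Denominator: sum_{i=1}^k i * prod_{j=i+1}^k x_j (empty product = 1) *)
Definition denF (k : nat) (x : nat -> R) : R :=
  sumR (fun i => INR i * prodR x (S i) (k - i)) 1 k.

Definition F (k : nat) (x : nat -> R) : R := numF k x / denF k x.

(* The set of values F(x_1,...,x_k) with all x_i >= 1 (only x_1..x_k matter). *)
Definition Fvalues (k : nat) (v : R) : Prop :=
  exists x : nat -> R, (forall i, (1 <= i <= k)%nat -> 1 <= x i) /\ v = F k x.

(* Main.v *)
Require Import Defs.
From Stdlib Require Import Reals Lra Lia.
Open Scope R_scope.

Lemma ln_le_sub1 (t : R) : 0 < t -> ln t <= t - 1.
Proof. intro Ht. pose proof (exp_ineq1_le (ln t)). rewrite exp_ln in H; lra. Qed.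

Lemma sumR_ext (f g : nat -> R) m l :
  (forall i, (m <= i < m + l)%nat -> f i = g i) -> sumR f m l = sumR g m l.
Proof.
  revert m; induction l; intros m H; simpl; auto.
  rewrite (H m) by lia. rewrite (IHl (S m)); auto. intros; apply H; lia.
Qed.

Lemma sumR_le (f g : nat -> R) m l :
  (forall i, (m <= i < m + l)%nat -> f i <= g i) -> sumR f m l <= sumR g m l.
Proof.
  revert m; induction l; intros m H; simpl; try lra.
  pose proof (H m ltac:(lia)). pose proof (IHl (S m) ltac:(intros; apply H; lia)). lra.
Qed.

Lemma sumR_add (f g : nat -> R) m l :
  sumR (fun i => f i + g i) m l = sumR f m l + sumR g m l.
Proof. revert m; induction l; intros m; simpl; [lra|rewrite IHl; lra]. Qed.

Lemma sumR_sub (f g : nat -> R) m l :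
  sumR (fun i => f i - g i) m l = sumR f m l - sumR g m l.
Proof. revert m; induction l; intros m; simpl; [lra|rewrite IHl; lra]. Qed.

Lemma sumR_scal (a : R) (f : nat -> R) m l :
  sumR (fun i => a * f i) m l = a * sumR f m l.
Proof. revert m; induction l; intros m; simpl; [lra|rewrite IHl; lra]. Qed.

Lemma sumR_const (c : R) m l : sumR (fun _ => c) m l = INR l * c.
Proof. revert m; induction l; intros m; cbn [sumR]; [simpl; lra|rewrite IHl, S_INR; lra]. Qed.

Lemma sumR_last (f : nat -> R) m l : sumR f m (S l) = sumR f m l + f (m + l)%nat.
Proof.
  revert m; induction l; intros m; simpl.
  - rewrite Nat.add_0_r; lra.
  - simpl in IHl. rewrite IHl. replace (S m + l)%nat with (m + S l)%nat by lia. lra.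
Qed.

Lemma prodR_ge1 (x : nat -> R) m l :
  (forall i, (m <= i < m + l)%nat -> 1 <= x i) -> 1 <= prodR x m l.
Proof.
  revert m; induction l; intros m H; simpl; try lra.
  pose proof (H m ltac:(lia)). pose proof (IHl (S m) ltac:(intros; apply H; lia)).
  nra.
Qed.

Lemma ln_prodR (x : nat -> R) m l :
  (forall i, (m <= i < m + l)%nat -> 1 <= x i) ->
  ln (prodR x m l) = sumR (fun j => ln (x j)) m l.
Proof.
  revert m; induction l; intros m H; simpl. apply ln_1.
  pose proof (H m ltac:(lia)).
  assert (1 <= prodR x (S m) l) by (apply prodR_ge1; intros; apply H; lia).
  rewrite ln_mult by lra. rewrite IHl; auto. intros; apply H; lia.
Qed.

Lemma idA k : sumR (fun i => ln (INR i) + (INR i - 1) * (ln (INR i) - ln (INR i - 1))) 1 k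
  = INR k * ln (INR k).
Proof.
  induction k. simpl; lra.
  rewrite sumR_last, IHk. replace (1 + k)%nat with (S k) by lia.
  replace (INR (S k) - 1) with (INR k) by (rewrite S_INR; lra).
  rewrite S_INR; ring.
Qed.

Lemma idB (x : nat -> R) k :
  sumR (fun i => sumR (fun j => ln (x j)) (S i) (k - i)) 1 k
  = sumR (fun i => (INR i - 1) * ln (x i)) 1 k.
Proof.
  induction k. reflexivity.
  rewrite sumR_last. rewrite (sumR_last (fun i => (INR i - 1) * _)).
  replace (1 + k)%nat with (S k) by lia. rewrite Nat.sub_diag. simpl (sumR _ _ 0).
  rewrite (sumR_ext _ (fun i => sumR (fun j => ln (x j)) (S i) (k - i) + ln (x (S k)))).
  - rewrite sumR_add, sumR_const, IHk. replace (INR (S k) - 1) with (INR k) by (rewrite S_INR; lra). ring.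
  - intros i Hi. replace (S k - i)%nat with (S (k - i)) by lia.
    rewrite sumR_last. f_equal. f_equal. f_equal. lia.
Qed.

Lemma term_bound (k i : nat) (p xi : R) :
  (1 <= i <= k)%nat -> 1 <= p -> 1 <= xi ->
  INR k * (ln (INR i) - ln (INR k) + ln p + (INR i - 1) * (ln (INR i) - ln (INR i - 1) - ln xi))
  <= INR i * p - INR k * (INR i * (1 - / xi)).
Proof.
  intros Hi Hp Hx.
  assert (Hk : 0 < INR k) by (apply lt_0_INR; lia).
  assert (Hii : 1 <= INR i) by (apply (le_INR 1); lia).
  assert (H1 : ln (INR i) - ln (INR k) + ln p <= INR i * p / INR k - 1).
  { replace (ln (INR i) - ln (INR k) + ln p) with (ln (INR i * p / INR k)).
    apply ln_le_sub1. apply Rdiv_lt_0_compat; nra.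
    unfold Rdiv. rewrite ln_mult, ln_Rinv, ln_mult; try nra.
    apply Rinv_0_lt_compat; nra. }
  assert (H2 : (INR i - 1) * (ln (INR i) - ln (INR i - 1) - ln xi) <= INR i / xi - (INR i - 1)).
  { destruct (Req_dec (INR i) 1) as [E|E].
    - rewrite E. replace (1 - 1) with 0 by ring. rewrite Rmult_0_l.
      assert (0 < / xi) by (apply Rinv_0_lt_compat; lra). unfold Rdiv. lra.
    - assert (Hg : 0 < INR i - 1) by lra.
      assert (ln (INR i) - ln (INR i - 1) - ln xi <= INR i / ((INR i - 1) * xi) - 1).
      { replace (ln (INR i) - ln (INR i - 1) - ln xi) with (ln (INR i / ((INR i - 1) * xi))).
        apply ln_le_sub1. apply Rdiv_lt_0_compat; nra.
        unfold Rdiv. rewrite ln_mult, ln_Rinv, ln_mult; try nra.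
        apply Rinv_0_lt_compat; nra. }
      apply Rmult_le_compat_l with (r := INR i - 1) in H; [|lra].
      replace ((INR i - 1) * (INR i / ((INR i - 1) * xi) - 1)) with (INR i / xi - (INR i - 1)) in H.
      lra. field. lra. }
  apply Rmult_le_compat_l with (r := INR k) in H1; [|lra].
  apply Rmult_le_compat_l with (r := INR k) in H2; [|lra].
  replace (INR k * (INR i * p / INR k - 1)) with (INR i * p - INR k) in H1 by (field; lra).
  unfold Rdiv in H2. nra.
Qed.

Lemma main_ineq (k : nat) (x : nat -> R) : (1 <= k)%nat ->
  (forall i, (1 <= i <= k)%nat -> 1 <= x i) ->
  INR k * numF k x <= denF k x.
Proof.
  intros hk Hx.
  assert (Hpos : forall i, (1 <= i <= k)%nat -> 1 <= prodR x (S i) (k - i)).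
  { intros; apply prodR_ge1; intros; apply Hx; lia. }
  assert (E : denF k x - INR k * numF k x =
     sumR (fun i => INR i * prodR x (S i) (k - i) - INR k * (INR i * (1 - / x i))) 1 k).
  { unfold denF, numF. rewrite sumR_sub, sumR_scal. reflexivity. }
  assert (Z : sumR (fun i => INR k * (ln (INR i) - ln (INR k) + ln (prodR x (S i) (k - i))
      + (INR i - 1) * (ln (INR i) - ln (INR i - 1) - ln (x i)))) 1 k = 0).
  { rewrite (sumR_ext _ (fun i => INR k * (
       (ln (INR i) + (INR i - 1) * (ln (INR i) - ln (INR i - 1))) + - ln (INR k)
       + sumR (fun j => ln (x j)) (S i) (k - i) - (INR i - 1) * ln (x i)))).
    - rewrite sumR_scal, sumR_sub, !sumR_add, sumR_const, <- sumR_add, idA, idB. ring.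
    - intros i Hi. rewrite ln_prodR. ring. intros; apply Hx; lia. }
  assert (sumR (fun i => INR k * (ln (INR i) - ln (INR k) + ln (prodR x (S i) (k - i))
      + (INR i - 1) * (ln (INR i) - ln (INR i - 1) - ln (x i)))) 1 k <=
    sumR (fun i => INR i * prodR x (S i) (k - i) - INR k * (INR i * (1 - / x i))) 1 k).
  { apply sumR_le. intros i Hi. apply term_bound; auto; try lia. apply Hpos; lia. apply Hx; lia. }
  lra.
Qed.

Lemma den_ge1 (k : nat) (x : nat -> R) : (1 <= k)%nat ->
  (forall i, (1 <= i <= k)%nat -> 1 <= x i) -> 1 <= denF k x.
Proof.
  intros hk Hx. unfold denF. destruct k as [|k]; [lia|]. cbn [sumR]. replace (INR 1) with 1 by reflexivity. replace (S k - 1)%nat with (k - 0)%nat by lia.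
  assert (1 <= prodR x 2 (k - 0)) by (apply prodR_ge1; intros; apply Hx; lia).
  assert (0 <= sumR (fun i => INR i * prodR x (S i) (S k - i)) 2 k).
  { replace 0 with (sumR (fun _ => 0) 2 k) by (rewrite sumR_const; ring).
    apply sumR_le. intros i Hi. apply Rmult_le_pos. apply pos_INR.
    assert (1 <= prodR x (S i) (S k - i)) by (apply prodR_ge1; intros; apply Hx; lia). lra. }
  lra.
Qed.

Definition xw (M : R) (i : nat) : R :=
  match i with 0%nat => 1 | 1%nat => M | _ => INR i / (INR i - 1) end.

Lemma prod_xw M m l : (1 <= m)%nat -> prodR (xw M) (S m) l = INR (m + l) / INR m.
Proof.
  revert m; induction l; intros m Hm.
  - simpl. rewrite Nat.add_0_r. field. apply not_0_INR; lia.
  - cbn [prodR]. rewrite IHl by lia.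
    destruct m as [|m]; [lia|].
    unfold xw. replace (S (S m) + l)%nat with (S m + S l)%nat by lia.
    assert (0 < INR (S m)) by (apply lt_0_INR; lia).
    replace (INR (S (S m)) - 1) with (INR (S m)) by (rewrite (S_INR (S m)); ring).
    field. split; [lra|]. apply not_0_INR; lia.
Qed.

Theorem theorem3 (k : nat) (hk : (1 <= k)%nat) :
  is_lub (Fvalues k) (1 / INR k).
Proof.
  assert (Hk : 0 < INR k) by (apply lt_0_INR; lia).
  split.
  - intros v [x [Hx ->]]. unfold F.
    pose proof (main_ineq k x hk Hx). pose proof (den_ge1 k x hk Hx).
    replace (numF k x / denF k x) with ((INR k * numF k x) * / denF k x * / INR k)
      by (field; lra).
    unfold Rdiv. rewrite Rmult_1_l.
    rewrite <- (Rmult_1_l (/ INR k)) at 2.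
    apply Rmult_le_compat_r. left; apply Rinv_0_lt_compat; lra.
    rewrite <- (Rinv_r (denF k x)) by lra.
    apply Rmult_le_compat_r. left; apply Rinv_0_lt_compat; lra. exact H.
  - intros b Hb. destruct (Rle_dec (1 / INR k) b) as [|Hn]; [auto|exfalso].
    set (e := INR k - INR k * INR k * b).
    assert (He : 0 < e).
    { unfold e. assert (b < 1 / INR k) by lra. unfold Rdiv in H.
      apply Rmult_lt_compat_l with (r := INR k * INR k) in H; [|nra].
      replace (INR k * INR k * (1 * / INR k)) with (INR k) in H by (field; lra). lra. }
    set (M := 1 + / e).
    assert (HM : 1 < M) by (unfold M; pose proof (Rinv_0_lt_compat e He); lra).
    assert (HMe : / M < e).
    { unfold M. apply Rmult_lt_reg_l with (r := 1 + / e). pose proof (Rinv_0_lt_compat e He); lra.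
      rewrite Rinv_r by (pose proof (Rinv_0_lt_compat e He); lra).
      rewrite Rmult_plus_distr_r, Rinv_l by lra. lra. }
    assert (Hin : Fvalues k (F k (xw M))).
    { exists (xw M). split; auto. intros i Hi. destruct i as [|[|i]]; [lia|simpl; lra|].
      unfold xw. assert (0 < INR (S (S i)) - 1) by (rewrite !S_INR; pose proof (pos_INR i); lra).
      apply Rmult_le_reg_r with (r := INR (S (S i)) - 1); auto.
      unfold Rdiv. rewrite Rmult_assoc, Rinv_l by lra. lra. }
    assert (HN : numF k (xw M) = INR k - / M).
    { unfold numF. destruct k as [|k]; [lia|]. cbn [sumR].
      rewrite (sumR_ext _ (fun _ => 1)).
      - rewrite sumR_const. simpl (xw M 1). rewrite (S_INR k). change (INR 1) with 1. lra.
      - intros i Hi. destruct i as [|[|i]]; try lia. unfold xw.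
        assert (0 < INR (S (S i)) - 1) by (rewrite !S_INR; pose proof (pos_INR i); lra).
        field. lra. }
    assert (HD : denF k (xw M) = INR k * INR k).
    { unfold denF. rewrite (sumR_ext _ (fun _ => INR k)).
      - rewrite sumR_const. ring.
      - intros i Hi. rewrite prod_xw by lia. replace (i + (k - i))%nat with k by lia.
        field. apply not_0_INR; lia. }
    pose proof (Hb _ Hin). unfold F in H. rewrite HN, HD in H.
    apply Rmult_le_compat_l with (r := INR k * INR k) in H; [|nra].
    replace (INR k * INR k * ((INR k - / M) / (INR k * INR k))) with (INR k - / M) in H
      by (field; lra).
    unfold e in HMe. lra.
Qed.
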